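(* For integers $s_1,s_2>0$ and $r_1,r_2\ge0$ (writing $\binom{a}{b}$ for binomial coefficients and $[\,\cdot\,]$ for bi-brackets, and $B_k$ for Bernoulli numbers with $\frac{X}{e^X-1}=\sum_k\frac{B_k}{k!}X^k$): (i) \begin{align*} \left[\begin{matrix}s_1\\ r_1\end{matrix}\right]\left[\begin{matrix}s_2\\ r_2\end{matrix}\right] =&\left[\begin{matrix}s_1,s_2\\ r_1,r_2\end{matrix}\right]+\left[\begin{matrix}s_2,s_1\\ r_2,r_1\end{matrix}\right]+\binom{r_1+r_2}{r_1}\left[\begin{matrix}s_1+s_2\\ r_1+r_2\end{matrix}\right]\\ &+\binom{r_1+r_2}{r_1}\sum_{j=1}^{s_1}\frac{(-1)^{s_2-1}B_{s_1+s_2-j}}{(s_1+s_2-j)!}\binom{s_1+s_2-j-1}{s_1-j}\left[\begin{matrix}j\\ r_1+r_2\end{matrix}\right]\\ &+\binom{r_1+r_2}{r_1}\sum_{j=1}^{s_2}\frac{(-1)^{s_1-1}B_{s_1+s_2-j}}{(s_1+s_2-j)!}\binom{s_1+s_2-j-1}{s_2-j}\left[\begin{matrix}j\\ r_1+r_2\end{matrix}\right]; \end{align*} (ii) \begin{align*} \left[\begin{matrix}s_1\\ r_1\end{matrix}\right]\left[\begin{matrix}s_2\\ r_2\end{matrix}\right] =&\sum_{\substack{1\le j\le s_1\\ 0\le k\le r_2}}\binom{s_1+s_2-j-1}{s_1-j}\binom{r_1+r_2-k}{r_1}(-1)^{r_2-k}\left[\begin{matrix}s_1+s_2-j,\ j\\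 k,\ r_1+r_2-k\end{matrix}\right]\\ &+\sum_{\substack{1\le j\le s_2\\ 0\le k\le r_1}}\binom{s_1+s_2-j-1}{s_1-1}\binom{r_1+r_2-k}{r_1-k}(-1)^{r_1-k}\left[\begin{matrix}s_1+s_2-j,\ j\\ k,\ r_1+r_2-k\end{matrix}\right]\\ &+\binom{s_1+s_2-2}{s_1-1}\left[\begin{matrix}s_1+s_2-1\\ r_1+r_2+1\end{matrix}\right]\\ &+\binom{s_1+s_2-2}{s_1-1}\sum_{j=0}^{r_1}\frac{(-1)^{r_2}B_{r_1+r_2-j+1}}{(r_1+r_2-j+1)!}\binom{r_1+r_2-j}{r_1-j}\left[\begin{matrix}s_1+s_2-1\\ j\end{matrix}\right]\\ &+\binom{s_1+s_2-2}{s_1-1}\sum_{j=0}^{r_2}\frac{(-1)^{r_1}B_{r_1+r_2-j+1}}{(r_1+r_2-j+1)!}\binom{r_1+r_2-j}{r_2-j}\left[\begin{matrix}s_1+s_2-1\\ j\end{matrix}\right]. \end{align*}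
   Context: For integers $s_1,\dots,s_l\ge1$ and $r_1,\dots,r_l\ge0$ the bi-bracket is \[ \left[\begin{matrix}s_1,\dots,s_l\\ r_1,\dots,r_l\end{matrix}\right]:=\sum_{\substack{u_1>\dots>u_l>0\\ v_1,\dots,v_l>0}}\prod_{j=1}^{l}\frac{u_j^{r_j}}{r_j!}\,\frac{v_j^{s_j-1}}{(s_j-1)!}\;q^{u_1v_1+\dots+u_lv_l}\in\mathbb{Q}[[q]]. \] *)

(* Defs.v *)
From mathcomp Require Import all_boot all_order all_algebra.
Set Implicit Arguments. Unset Strict Implicit. Unset Printing Implicit Defensive.
Import Order.TTheory GRing.Theory Num.Theory.
Local Open Scope ring_scope.

(* A formal power series in Q[[q]], represented by its coefficient sequence:
   f n is the coefficient of q^n. *)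
Definition qseries := nat -> rat.

Definition qmul (f g : qseries) : qseries :=
  fun n => \sum_(i < n.+1) f i * g (n - i)%N.

(* Since u_j, v_j >= 1 and sum u_j v_j = N, all u_j, v_j lie in [1, N], so
   the sum may be taken over u, v : 'I_l -> 'I_(N+1). *)
Definition bibracket (s r : seq nat) : qseries :=
  fun N =>
  \sum_(u : {ffun 'I_(size s) -> 'I_N.+1})
  \sum_(v : {ffun 'I_(size s) -> 'I_N.+1}
        | [&& [forall i : 'I_(size s), 0 < (u i : nat)]%N,
              [forall i : 'I_(size s), 0 < (v i : nat)]%N,
              [forall i : 'I_(size s), forall j : 'I_(size s), (i < j)%N ==> (u j < u i)%N] &
              (\sum_(i < size s) (u i : nat) * (v i : nat))%N == N])
    \prod_(i < size s)
       (((u i : nat) ^ nth 0%N r i)%:R / ((nth 0%N r i)`!)%:R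
        * ((v i : nat) ^ (nth 0%N s i).-1)%:R / (((nth 0%N s i).-1)`!)%:R).

(* Comparing
   coefficients in ((e^X-1)/X) * sum_k B_k X^k/k! = 1 gives
   sum_(k<=n) B_k/(k! (n-k+1)!) = [n == 0], i.e. B_0 = 1 and
   B_n = - n! * sum_(k<n) B_k / (k! (n-k+1)!) for n >= 1. *)
Fixpoint bern_upto (n : nat) : seq rat :=
  match n with
  | 0 => [:: 1]
  | n'.+1 =>
      let s := bern_upto n' in
      rcons s (- (n`!)%:R *
               \sum_(k < n) s`_k / ((k`!)%:R * (((n - k).+1)`!)%:R))
  end.

Definition bernoulli (n : nat) : rat := (bern_upto n)`_n.

(* Main.v *)
Require Import Defs.
From mathcomp Require Import all_boot all_order all_algebra.
From mathcomp Require Import ring lra zify.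
Import Order.TTheory GRing.Theory Num.Theory.
Set Implicit Arguments. Unset Strict Implicit. Unset Printing Implicit Defensive.
Local Open Scope ring_scope.

Definition ef (n : nat) (x : rat) : rat := x ^+ n / (n`!)%:R.

Lemma fact_neq0 n : (n`!)%:R != 0 :> rat.
Proof. by rewrite pnatr_eq0 -lt0n fact_gt0. Qed.

Lemma efD n x y : ef n (x + y) = \sum_(i < n.+1) ef i x * ef (n - i) y.
Proof.
rewrite /ef addrC exprDn mulr_suml; apply: eq_bigr => i _.
have Hi : (i <= n)%N by rewrite -ltnS.
rewrite -mulr_natr -(bin_fact Hi) !natrM.
have := fact_neq0 i; have := fact_neq0 (n - i).
have : ('C(n, i))%:R != 0 :> rat by rewrite pnatr_eq0 -lt0n bin_gt0.
move=> h1 h2 h3; field.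
by rewrite h1 h2 h3.
Qed.


Lemma ef0 x : ef 0 x = 1.
Proof. by rewrite /ef expr0 fact0 divr1. Qed.

Lemma ef_at0 n : ef n 0 = (n == 0)%N%:R.
Proof. case: n => [|n]; first by rewrite /ef expr0 fact0 divr1.
by rewrite /ef expr0n mul0r. Qed.

Lemma ef_opp n x : ef n (- x) = (-1) ^+ n * ef n x.
Proof. by rewrite /ef -[- x]mulN1r exprMn mulrA. Qed.

Lemma efM p q x : ef p x * ef q x = ('C(p + q, p))%:R * ef (p + q) x.
Proof.
rewrite /ef exprD.
have Hi : (p <= p + q)%N by rewrite leq_addr.
rewrite -(bin_fact Hi) !natrM addKn.
have := fact_neq0 p; have := fact_neq0 q.
have : ('C(p + q, p))%:R != 0 :> rat by rewrite pnatr_eq0 -lt0n bin_gt0.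
move=> h1 h2 h3; field.
by rewrite h1 h2 h3.
Qed.

Lemma ef_mulx n x : x * ef n x = (n.+1)%:R * ef n.+1 x.
Proof.
rewrite /ef factS natrM exprS.
have := fact_neq0 n.
have : (n.+1)%:R != 0 :> rat by rewrite pnatr_eq0.
move=> h1 h2; field.
by rewrite h2 addrC natr1.
Qed.

Lemma size_bern n : size (bern_upto n) = n.+1.
Proof. by elim: n => //= n IH; rewrite size_rcons IH. Qed.

Lemma bern_uptoE n k : (k <= n)%N -> (bern_upto n)`_k = bernoulli k.
Proof.
elim: n => [|n IH]; first by rewrite leqn0 => /eqP ->.
rewrite leq_eqVlt => /orP [/eqP -> //|].
rewrite ltnS => Hk /=; rewrite nth_rcons size_bern ltnS Hk; exact: IH.
Qed.

Definition bt k := bernoulli k / (k`!)%:R.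

Lemma bt0 : bt 0 = 1.
Proof. by rewrite /bt /bernoulli /= divr1. Qed.

Lemma bt_rec n : \sum_(k < n.+1) bt k / ((n - k).+1`!)%:R = (n == 0)%N%:R.
Proof.
case: n => [|n]; first by rewrite big_ord1 bt0 /= divr1.
rewrite big_ord_recr /= subnn /bt.
have -> : bernoulli n.+1 = - ((n.+1)`!)%:R *
   \sum_(k < n.+1) bernoulli k / ((k`!)%:R * (((n.+1 - k).+1)`!)%:R).
  rewrite /bernoulli /= nth_rcons size_bern ltnn eqxx.
  congr (_ * _); apply: eq_bigr => i _; rewrite bern_uptoE //.
  by rewrite -ltnS.
rewrite divr1 !mulNr mulrAC mulfV ?fact_neq0 // mul1r.
rewrite -sumrN -big_split /=; apply: big1 => i _.
by rewrite invfM mulrA subrr.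
Qed.


Definition sq (c : nat -> rat) D : {poly rat} := \poly_(i < D) c i.

Lemma coef_sq c D i : (i < D)%N -> (sq c D)`_i = c i.
Proof. by move=> h; rewrite /sq coef_poly h. Qed.

Lemma ef1 n : ef n 1 = 1 / (n`!)%:R.
Proof. by rewrite /ef expr1n. Qed.

Lemma efN1 n : ef n (-1) = (-1) ^+ n / (n`!)%:R.
Proof. by []. Qed.

Definition aa i : rat := (-1) ^+ i / ((i.+1)`!)%:R.

Lemma claim1 k : \sum_(p < k.+1) (-1) ^+ p / (p`!)%:R * (1 / (((k - p).+1)`!)%:R) = aa k.
Proof.
have H := efD k.+1 (-1) 1; rewrite addNr ef_at0 /= big_ord_recr /= subnn ef0 mulr1 in H.
have E : \sum_(i < k.+1) ef i (-1) * ef (k.+1 - i) 1 = - ef k.+1 (-1).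
  by apply/eqP; rewrite -addr_eq0 -H.
transitivity (\sum_(i < k.+1) ef i (-1) * ef (k.+1 - i) 1).
  apply: eq_bigr => i _; rewrite efN1 ef1 subSn //.
  by rewrite -ltnS.
rewrite E efN1 /aa exprS; ring.
Qed.

Lemma coefM_sq a b D i : (i < D)%N ->
  (sq a D * sq b D)`_i = \sum_(j < i.+1) a j * b (i - j)%N.
Proof.
move=> hi; rewrite coefM; apply: eq_bigr => j _.
have hj : (j <= i)%N by rewrite -ltnS.
rewrite !coef_sq //; [exact: leq_ltn_trans (leq_subr _ _) hi|exact: leq_ltn_trans hj hi].
Qed.

Definition Ac i : rat := 1 / ((i.+1)`!)%:R.
Definition Ec i : rat := (-1) ^+ i / (i`!)%:R.

Lemma BA_coef D k : (k < D)%N -> (sq bt D * sq Ac D)`_k = (k == 0)%N%:R.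
Proof.
move=> hk; rewrite coefM_sq // -bt_rec; apply: eq_bigr => j _.
by rewrite /Ac div1r.
Qed.

Lemma Qlem n : \sum_(k < n.+1) bt k * aa (n - k) = (-1) ^+ n / (n`!)%:R.
Proof.
have EA : forall k, (k < n.+1)%N -> (sq Ec n.+1 * sq Ac n.+1)`_k = aa k.
  by move=> k hk; rewrite coefM_sq // -claim1.
transitivity ((sq bt n.+1 * (sq Ec n.+1 * sq Ac n.+1))`_n).
  rewrite coefM; apply: eq_bigr => j _.
  have hj : (j < n.+1)%N by [].
  by rewrite coef_sq // EA // ltnS leq_subr.
rewrite mulrA mulrAC coefM big_ord_recl BA_coef // mul1r coef_sq // subn0.
rewrite big1 ?addr0 // => j _.
by rewrite BA_coef // mul0r.
by [].
Qed.

Lemma uniq_conv (x y : nat -> rat) :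
  (forall n, \sum_(k < n.+1) x k * aa (n - k) = (n == 0)%N%:R) ->
  (forall n, \sum_(k < n.+1) y k * aa (n - k) = (n == 0)%N%:R) ->
  forall n, x n = y n.
Proof.
move=> hx hy n; elim/ltn_ind: n => n IH.
have := hx n; rewrite -(hy n) !big_ord_recr /= subnn /aa expr0 !div1r.
have -> : \sum_(i < n) x i * aa (n - i) = \sum_(i < n) y i * aa (n - i).
  by apply: eq_bigr => i _; rewrite IH.
by move/addrI; rewrite invr1 !mulr1.
Qed.

Lemma bt_par n : (-1) ^+ n * bt n = bt n + (n == 1)%N%:R.
Proof.
apply: (@uniq_conv (fun n => (-1) ^+ n * bt n) (fun n => bt n + (n == 1)%N%:R)) => {n} n.
  transitivity ((-1) ^+ n * \sum_(k < n.+1) bt k / (((n - k).+1)`!)%:R).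
    rewrite mulr_sumr; apply: eq_bigr => k _.
    have hk : (k <= n)%N by rewrite -ltnS.
    have -> : (-1) ^+ n = (-1) ^+ k * (-1) ^+ (n - k) :> rat by rewrite -exprD subnKC.
    rewrite /aa; ring.
  by rewrite (bt_rec n); case: n => [|n]; rewrite ?expr0 ?mul1r ?mulr0.
under eq_bigr do rewrite mulrDl. rewrite big_split /= Qlem.
case: n => [|n]; first by rewrite big_ord1 /= mul0r addr0 expr0 divr1.
rewrite big_ord_recl big_ord_recl /= big1; last by move=> i _; rewrite mul0r.
by rewrite mul0r add0r addr0 mul1r subn1 /= /aa exprS; ring.
Qed.


Lemma coefM_eq (p q q' : {poly rat}) n :
  (forall k, (k <= n)%N -> q`_k = q'`_k) -> (p * q)`_n = (p * q')`_n.
Proof.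
move=> h; rewrite !coefM; apply: eq_bigr => j _; rewrite h //; exact: leq_subr.
Qed.

Definition Fx (x : rat) i := ef i x.

Lemma FH a m : \sum_(0 <= v < m) ef a v%:R + bt a.+1 =
   \sum_(j < a.+2) bt j * ef (a.+1 - j) m%:R.
Proof.
elim: m => [|m IH].
  rewrite big_geq // add0r big_ord_recr /= subnn ef0 mulr1 big1 ?add0r // => j _.
  by rewrite ef_at0 subn_eq0 leqNgt ltn_ord mulr0.
rewrite big_nat_recr //= addrAC IH.
set D := a.+2.
have E1 : forall x, \sum_(j < a.+2) bt j * ef (a.+1 - j) x = (sq bt D * sq (Fx x) D)`_a.+1.
  by move=> x; rewrite coefM_sq.
rewrite -natr1 !E1.
have E2 : (sq bt D * sq (Fx (m%:R + 1)) D)`_a.+1 = (sq bt D * (sq (Fx m%:R) D * sq (Fx 1) D))`_a.+1.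
  apply: coefM_eq => k hk.
  rewrite coefM_sq ?coef_sq; try by rewrite ltnS.
  by rewrite /Fx efD.
rewrite E2.
have E3 : (sq bt D * (sq (Fx m%:R) D * sq (Fx 1) D))`_a.+1 - (sq bt D * sq (Fx m%:R) D)`_a.+1
   = (sq bt D * sq (Fx m%:R) D * ('X * sq Ac D))`_a.+1.
  rewrite -coefB mulrA -{2}[sq bt D * _]mulr1 -mulrBr; apply: coefM_eq => k hk.
  rewrite coefB coefXM coef1 !coef_sq; try lia.
  case: k hk => [|k] hk; first by rewrite /Fx ef0 subrr.
  by rewrite /Fx ef1 subr0 /Ac.
apply/eqP; rewrite eq_sym addrC -subr_eq; apply/eqP; rewrite E3.
have -> : sq bt D * sq (Fx m%:R) D * ('X * sq Ac D) = 'X * (sq bt D * sq Ac D * sq (Fx m%:R) D) by ring.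
rewrite coefXM /= coefM big_ord_recl BA_coef // mul1r subn0 coef_sq //.
rewrite big1 ?addr0 // => j _.
by rewrite BA_coef ?mul0r // ltnS ltnW.
Qed.


Definition Lc a b m := \sum_(1 <= v < m) ef a v%:R * ef b (m - v)%:R.
Definition hh p q := (-1) ^+ q * bt (p + q).+1 * ('C(p + q, p))%:R.
Definition P1f a b m := \sum_(n < a.+1) ef n m%:R * hh (a - n) b.
Definition Rc a b m := ef (a + b).+1 m%:R + P1f a b m + P1f b a m.

Lemma Lrec a b m : m%:R * Lc a b m = a.+1%:R * Lc a.+1 b m + b.+1%:R * Lc a b.+1 m.
Proof.
rewrite /Lc !mulr_sumr -big_split /=; apply: eq_big_nat => v /andP [h1 h2].
have -> : m%:R = v%:R + (m - v)%:R :> rat by rewrite -natrD subnKC // ltnW.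
transitivity (v%:R * ef a v%:R * ef b (m - v)%:R + ef a v%:R * ((m - v)%:R * ef b (m - v)%:R)).
  ring.
rewrite (ef_mulx a) (ef_mulx b); ring.
Qed.

Lemma binid p q : (p.+1 * 'C((p + q).+1, p.+1))%N = (q.+1 * 'C((p + q).+1, p))%N.
Proof. by rewrite mul_bin_left; congr (_ * _)%N; rewrite -addnS addKn. Qed.

Lemma hid p q : p.+1%:R * hh p.+1 q + q.+1%:R * hh p q.+1 = 0.
Proof.
rewrite /hh addSn addnS exprS.
have E : (p.+1)%:R * ('C((p + q).+1, p.+1))%:R = (q.+1)%:R * ('C((p + q).+1, p))%:R :> rat.
  by rewrite -!natrM binid.
have -> : p.+1%:R * ((-1) ^+ q * bt (p + q).+2 * ('C((p + q).+1, p.+1))%:R) =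
   (-1) ^+ q * bt (p + q).+2 * ((p.+1)%:R * ('C((p + q).+1, p.+1))%:R) by ring.
rewrite E; ring.
Qed.

Lemma Prec a b m : a.+1%:R * P1f a.+1 b m + b.+1%:R * P1f a b.+1 m = m%:R * P1f a b m.
Proof.
have S : a.+1%:R * P1f a.+1 b m = m%:R * P1f a b m +
   \sum_(n < a.+1) ((a - n).+1)%:R * ef n m%:R * hh (a - n).+1 b.
  rewrite /P1f !mulr_sumr.
  transitivity (\sum_(n < a.+2) n%:R * (ef n m%:R * hh (a.+1 - n) b) +
                \sum_(n < a.+2) (a.+1 - n)%:R * (ef n m%:R * hh (a.+1 - n) b)).
    rewrite -big_split /=; apply: eq_bigr => n _.
    have hn : (n <= a.+1)%N by rewrite -ltnS.
    by rewrite -mulrDl -natrD subnKC.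
  congr (_ + _).
    rewrite big_ord_recl /= mul0r add0r; apply: eq_bigr => n _.
    by rewrite /bump /= add1n mulrA -ef_mulx subSS; ring.
  rewrite big_ord_recr /= subnn mul0r addr0; apply: eq_bigr => n _.
  have hn : (n <= a)%N by rewrite -ltnS.
  by rewrite subSn //; ring.
rewrite S -addrA -[RHS]addr0; congr (_ + _).
rewrite /P1f mulr_sumr -big_split big1 // => n _ /=.
have := hid (a - n) b.
move=> H; rewrite -[RHS](mulr0 (ef n m%:R)) -H; ring.
Qed.

Lemma Rrec a b m : m%:R * Rc a b m = a.+1%:R * Rc a.+1 b m + b.+1%:R * Rc a b.+1 m.
Proof.
have H1 := Prec a b m; have H2 := Prec b a m.
have H3 := ef_mulx (a + b).+1 m%:R.
rewrite /Rc !mulrDr H3 -H1 -H2 addSn addnS.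
have -> : (a + b).+2%:R = a.+1%:R + b.+1%:R :> rat by rewrite -natrD addSn addnS.
ring.
Qed.

Lemma Lbase a m : (0 < m)%N -> Lc a 0 m = Rc a 0 m.
Proof.
move=> hm.
have F := FH a m.
rewrite big_ltn // ef_at0 in F.
have E1 : Lc a 0 m = \sum_(1 <= v < m) ef a v%:R.
  by rewrite /Lc; apply: eq_bigr => v _; rewrite ef0 mulr1.
rewrite (reindex_inj rev_ord_inj) /= in F.
rewrite big_ord_recr /= subnn subn0 bt0 mul1r in F.
have E2 : \sum_(i < a.+1) bt (a.+2 - (widen_ord (leqnSn a.+1) i).+1) * ef (a.+1 - (a.+2 - (widen_ord (leqnSn a.+1) i).+1)) m%:R = P1f a 0 m.
  rewrite /P1f; apply: eq_bigr => i _ /=.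
  have hi : (i <= a)%N by rewrite -ltnS.
  rewrite /hh addn0 binn expr0 mul1r mulr1 mulrC subSS.
  have -> : (a.+1 - (a.+1 - i))%N = i by lia.
  by rewrite subSn.
rewrite E2 in F.
rewrite E1 /Rc addn0.
have E3 : P1f 0 a m = (-1) ^+ a * bt a.+1.
  by rewrite /P1f big_ord1 /= ef0 mul1r /hh add0n bin0 mulr1.
rewrite E3.
have P := bt_par a.+1.
rewrite exprS /= in P.
have : \sum_(1 <= i < m) ef a i%:R = ef a.+1 m%:R + P1f a 0 m - bt a.+1 - (a == 0)%N%:R.
  apply: (addrI ((a == 0)%N%:R)); apply: (addIr (bt a.+1)); rewrite F; ring.
move=> ->.
have -> : (a == 0)%N%:R = (-1) * (-1) ^+ a * bt a.+1 - bt a.+1 by rewrite P /=; ring.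
ring.
Qed.

Lemma core b : forall a m, (0 < m)%N -> Lc a b m = Rc a b m.
Proof.
elim: b => [|b IH] a m hm; first exact: Lbase.
have H1 := Lrec a b m; have H2 := Rrec a b m.
rewrite (IH a m hm) (IH a.+1 m hm) in H1.
rewrite H1 in H2.
have H3 : b.+1%:R * Lc a b.+1 m = b.+1%:R * Rc a b.+1 m.
  by move/addrI: H2.
apply: (mulfI _ H3); by rewrite pnatr_eq0.
Qed.


Lemma reindex_bij (I J : finType) (P : pred I) (Q : pred J) (h : J -> I) (h' : I -> J)
    (F : I -> rat) :
  (forall j, Q j -> P (h j)) -> (forall j, Q j -> h' (h j) = j) ->
  (forall i, P i -> Q (h' i)) -> (forall i, P i -> h (h' i) = i) ->
  \sum_(i | P i) F i = \sum_(j | Q j) F (h j).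
Proof.
move=> h1 h2 h3 h4; rewrite (reindex_onto h h' h4); apply: eq_bigl => j.
apply/andP/idP => [[Pj /eqP <-]|Qj]; first exact: h3.
by rewrite h1 // h2.
Qed.

Lemma reindex_bij2 (I J : finType) (P : pred I) (Q : pred J) (h : J -> I) (h' : I -> J)
    (F : I -> rat) (F' : J -> rat) :
  (forall j, Q j -> P (h j)) -> (forall j, Q j -> h' (h j) = j) ->
  (forall i, P i -> Q (h' i)) -> (forall i, P i -> h (h' i) = i) ->
  (forall j, Q j -> F (h j) = F' j) ->
  \sum_(i | P i) F i = \sum_(j | Q j) F' j.
Proof.
move=> h1 h2 h3 h4 h5; rewrite (@reindex_bij I J P Q h h' F h1 h2 h3 h4).
exact: eq_bigr.
Qed.

Lemma ffun1K (A : Type) (f : {ffun 'I_1 -> A}) : [ffun=> f ord0] = f.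
Proof. by apply/ffunP => i; rewrite ffunE (ord1 i). Qed.

Lemma ffun1_sum (A : finType) (P : pred {ffun 'I_1 -> A}) (F : {ffun 'I_1 -> A} -> rat) :
  \sum_(f | P f) F f = \sum_(a : A | P [ffun => a]) F [ffun => a].
Proof.
apply: (@reindex_bij _ _ P (fun a => P [ffun=> a]) (fun a => [ffun=> a]) (fun f => f ord0)).
- by [].
- by move=> a _; rewrite ffunE.
- by move=> f Pf; rewrite ffun1K.
- by move=> f Pf; rewrite ffun1K.
Qed.

Definition mk2 (A : Type) (p : A * A) : {ffun 'I_2 -> A} :=
  [ffun i : 'I_2 => if (i : nat) == 0%N then p.1 else p.2].

Lemma ord2P (i : 'I_2) : i = ord0 \/ i = ord_max.
Proof.
case: i => [[|[|k]] h]; [left|right|by []]; exact: val_inj.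
Qed.

Lemma mk2K (A : Type) (f : {ffun 'I_2 -> A}) : mk2 (f ord0, f ord_max) = f.
Proof. by apply/ffunP => i; rewrite ffunE; case: (ord2P i) => ->. Qed.

Lemma ffun2_sum (A : finType) (P : pred {ffun 'I_2 -> A}) (F : {ffun 'I_2 -> A} -> rat) :
  \sum_(f | P f) F f = \sum_(p : A * A | P (mk2 p)) F (mk2 p).
Proof.
apply: (@reindex_bij _ _ P (fun p => P (mk2 p)) (@mk2 A) (fun f => (f ord0, f ord_max))).
- by [].
- by move=> [a b] _; rewrite !ffunE.
- by move=> f Pf; rewrite mk2K.
- by move=> f Pf; rewrite mk2K.
Qed.

Lemma forall1 (P : 'I_1 -> bool) : [forall i, P i] = P ord0.
Proof.
apply/forallP/idP => [h|h i]; first exact: h.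
by rewrite (ord1 i).
Qed.

Lemma forall2 (P : 'I_2 -> bool) : [forall i, P i] = P ord0 && P ord_max.
Proof.
apply/forallP/andP => [h|[h0 h1] i]; first by split; apply: h.
by case: (ord2P i) => ->.
Qed.

Definition T N := 'I_N.+1.
Definition X4 N := ((T N * T N) * (T N * T N))%type.
Definition cond4 N (x : X4 N) := [&& 0 < (x.1.1 : nat), 0 < (x.1.2 : nat), 0 < (x.2.1 : nat),
   0 < (x.2.2 : nat) & (x.1.1 : nat) * x.2.1 + (x.1.2 : nat) * x.2.2 == N]%N.
Definition Q4 N (P : nat -> nat -> nat -> nat -> bool) (G : nat -> nat -> nat -> nat -> rat) :=
  \sum_(x : X4 N | cond4 x && P x.1.1 x.1.2 x.2.1 x.2.2) G x.1.1 x.1.2 x.2.1 x.2.2.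
Definition cond1 N (x : T N * T N) := [&& 0 < (x.1 : nat), 0 < (x.2 : nat) & (x.1 : nat) * x.2 == N]%N.
Definition C1 N (G : nat -> nat -> rat) := \sum_(x : T N * T N | cond1 x) G x.1 x.2.

Definition W1 s r (u v : nat) : rat := ef r u%:R * ef s.-1 v%:R.
Definition W2 s1 r1 s2 r2 (u1 u2 v1 v2 : nat) : rat := W1 s1 r1 u1 v1 * W1 s2 r2 u2 v2.

Lemma termE (u v r s : nat) : (u ^ r)%:R / (r`!)%:R * (v ^ s)%:R / (s`!)%:R = ef r u%:R * ef s v%:R :> rat.
Proof. by rewrite /ef !natrX mulrA. Qed.

Lemma bib1 s r N : bibracket [:: s] [:: r] N = C1 N (W1 s r).
Proof.
rewrite /bibracket /= ffun1_sum.
under eq_bigr do rewrite ffun1_sum.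
rewrite pair_big_dep /=; apply: eq_big => [[u v]|[u v]] /=.
  by rewrite !forall1 big_ord1 !ffunE /cond1 /=; case: (0 < u)%N => //=; case: (0 < v)%N.
move=> _; rewrite big_ord1 !ffunE /W1 /= termE //.
Qed.

Lemma mk2_0 (A : Type) (p : A * A) : mk2 p ord0 = p.1.
Proof. by rewrite ffunE. Qed.
Lemma mk2_1 (A : Type) (p : A * A) : mk2 p ord_max = p.2.
Proof. by rewrite ffunE. Qed.

Lemma bib2 s1 s2 r1 r2 N : bibracket [:: s1; s2] [:: r1; r2] N =
  Q4 N (fun u1 u2 _ _ => (u2 < u1)%N) (W2 s1 r1 s2 r2).
Proof.
rewrite /bibracket /= ffun2_sum.
under eq_bigr do rewrite ffun2_sum.
rewrite pair_big_dep /=; apply: eq_big => [[[u1 u2] [v1 v2]]|[[u1 u2] [v1 v2]]] /=.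
  rewrite !forall2 big_ord_recr big_ord1 /= !ffunE /= /cond4 /= andbT.
  by case: (0 < u1)%N; case: (0 < u2)%N; case: (0 < v1)%N; case: (0 < v2)%N; case: (u2 < u1)%N; case: (_ == N).
move=> _; rewrite big_ord_recr big_ord1 /= !ffunE /= /W2 /W1 !termE //.
Qed.

Definition C1g K i (G : nat -> nat -> rat) :=
  \sum_(x : 'I_K.+1 * 'I_K.+1 | [&& 0 < (x.1 : nat), 0 < (x.2 : nat) & (x.1 : nat) * x.2 == i]%N) G x.1 x.2.

Lemma C1g_widen i K G : (i <= K)%N -> C1g i i G = C1g K i G.
Proof.
move=> hK; rewrite /C1g.
apply: (@reindex_bij2 _ _ _ _ (fun x : 'I_K.+1 * 'I_K.+1 => (inord x.1, inord x.2) : 'I_i.+1 * 'I_i.+1)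
   (fun x : 'I_i.+1 * 'I_i.+1 => (inord x.1, inord x.2) : 'I_K.+1 * 'I_K.+1)).
- move=> [a b] /= /and3P [h1 h2 /eqP h3].
  rewrite !inordK; [by rewrite h1 h2 h3 eqxx| |]; nia.
- move=> [a b] /= /and3P [h1 h2 /eqP h3].
  congr (_, _); apply: val_inj; rewrite /= !inordK //; nia.
- move=> [a b] /= /and3P [h1 h2 /eqP h3].
  have ha := ltn_ord a; have hb := ltn_ord b.
  rewrite !inordK; [by rewrite h1 h2 h3 eqxx| |]; lia.
- move=> [a b] /= /and3P [h1 h2 /eqP h3].
  have ha := ltn_ord a; have hb := ltn_ord b.
  congr (_, _); apply: val_inj; rewrite /= !inordK //; lia.
- move=> [a b] /= /and3P [h1 h2 /eqP h3].
  rewrite !inordK //; nia.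
Qed.

Lemma C1E N G : C1 N G = C1g N N G.
Proof. by []. Qed.

Lemma qmulQ4 s1 r1 s2 r2 N :
  qmul (bibracket [:: s1] [:: r1]) (bibracket [:: s2] [:: r2]) N =
  Q4 N (fun _ _ _ _ => true) (W2 s1 r1 s2 r2).
Proof.
rewrite /qmul.
transitivity (\sum_(i < N.+1) C1g N i (W1 s1 r1) * C1g N (N - i)%N (W1 s2 r2)).
  apply: eq_bigr => i _; rewrite !bib1 !C1E.
  have hi : (i <= N)%N by rewrite -ltnS.
  by rewrite (C1g_widen _ hi) (C1g_widen _ (leq_subr i N)).
rewrite /C1g.
under eq_bigr do rewrite big_distrl /=.
under eq_bigr do under eq_bigr do rewrite big_distrr /=.
under eq_bigr do rewrite pair_big_dep /=.
rewrite pair_big_dep /= /Q4.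
symmetry.
apply: (@reindex_bij2 _ _ _ _
  (fun p : 'I_N.+1 * (('I_N.+1 * 'I_N.+1) * ('I_N.+1 * 'I_N.+1)) => ((p.2.1.1, p.2.2.1), (p.2.1.2, p.2.2.2)) : X4 N)
  (fun z : X4 N => (inord ((z.1.1 : nat) * z.2.1), ((z.1.1, z.2.1), (z.1.2, z.2.2))))).
- move=> [i [[x1 x2] [y1 y2]]] /= /and4P [/and3P [h1 h2 /eqP h3] h4 h5 /eqP h6].
  have hi := ltn_ord i.
  rewrite /cond4 /= h1 h2 h4 h5 /=; apply/eqP; lia.
- move=> [i [[x1 x2] [y1 y2]]] /= /and4P [/and3P [h1 h2 /eqP h3] h4 h5 /eqP h6].
  have hi := ltn_ord i.
  congr (_, _); apply: val_inj; rewrite /= inordK //; lia.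
- move=> [[u1 u2] [v1 v2]] /=; rewrite /cond4 /= andbT => /and5P [h1 h2 h3 h4 /eqP h5].
  rewrite inordK; last by nia.
  rewrite h1 h2 h3 h4 /= eqxx /=; apply/eqP; lia.
- by move=> [[u1 u2] [v1 v2]].
- move=> [i [[x1 x2] [y1 y2]]] /= _.
  by rewrite /W2.
Qed.


Lemma Q4_split N (P A : nat -> nat -> nat -> nat -> bool) G :
  Q4 N P G = Q4 N (fun a b c d => P a b c d && A a b c d) G
           + Q4 N (fun a b c d => P a b c d && ~~ A a b c d) G.
Proof.
rewrite /Q4 (bigID (fun x : X4 N => A x.1.1 x.1.2 x.2.1 x.2.2)) /=.
by congr (_ + _); apply: eq_bigl => x; rewrite andbA.
Qed.

Lemma Q4_eqP N (P P' : nat -> nat -> nat -> nat -> bool) G :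
  (forall a b c d, P a b c d = P' a b c d) -> Q4 N P G = Q4 N P' G.
Proof. by move=> h; apply: eq_bigl => x; rewrite h. Qed.

Lemma Q4_ext N (P : nat -> nat -> nat -> nat -> bool) (G G' : nat -> nat -> nat -> nat -> rat) :
  (forall a b c d, (0 < a)%N -> (0 < b)%N -> (0 < c)%N -> (0 < d)%N ->
     (a * c + b * d = N)%N -> P a b c d -> G a b c d = G' a b c d) ->
  Q4 N P G = Q4 N P G'.
Proof.
move=> h; apply: eq_bigr => [[[a b] [c d]]] /= /andP [].
by rewrite /cond4 /= => /and5P [h1 h2 h3 h4 /eqP h5] hP; apply: h.
Qed.

Lemma Q4_sum N P (I : Type) (r : seq I) (F : I -> nat -> nat -> nat -> nat -> rat) :
  Q4 N P (fun a b c d => \sum_(j <- r) F j a b c d) = \sum_(j <- r) Q4 N P (F j).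
Proof. by rewrite /Q4 exchange_big. Qed.

Lemma Q4_scale N P k G : Q4 N P (fun a b c d => k * G a b c d) = k * Q4 N P G.
Proof. by rewrite /Q4 mulr_sumr. Qed.

Lemma Q4_add N P G1 G2 : Q4 N P (fun a b c d => G1 a b c d + G2 a b c d) = Q4 N P G1 + Q4 N P G2.
Proof. by rewrite /Q4 big_split. Qed.

Lemma C1_ext N (G G' : nat -> nat -> rat) :
  (forall a b, (0 < a)%N -> (0 < b)%N -> (a * b = N)%N -> G a b = G' a b) -> C1 N G = C1 N G'.
Proof.
move=> h; apply: eq_bigr => [[a b]] /=.
by rewrite /cond1 /= => /and3P [h1 h2 /eqP h3]; apply: h.
Qed.

Lemma C1_sum N (I : Type) (r : seq I) (F : I -> nat -> nat -> rat) :
  C1 N (fun a b => \sum_(j <- r) F j a b) = \sum_(j <- r) C1 N (F j).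
Proof. by rewrite /C1 exchange_big. Qed.

Lemma C1_scale N k G : C1 N (fun a b => k * G a b) = k * C1 N G.
Proof. by rewrite /C1 mulr_sumr. Qed.

Lemma C1_add N G1 G2 : C1 N (fun a b => G1 a b + G2 a b) = C1 N G1 + C1 N G2.
Proof. by rewrite /C1 big_split. Qed.

Lemma C1_swap N G : C1 N G = C1 N (fun x y => G y x).
Proof.
apply: (@reindex_bij2 _ _ _ _ (fun x : T N * T N => (x.2, x.1)) (fun x : T N * T N => (x.2, x.1))).
- by move=> [a b]; rewrite /cond1 /= mulnC => /and3P [-> -> ->].
- by move=> [a b].
- by move=> [a b]; rewrite /cond1 /= mulnC => /and3P [-> -> ->].
- by move=> [a b].
- by move=> [a b].
Qed.

Lemma Q4_swap N P G : Q4 N P G = Q4 N (fun a b c d => P b a d c) (fun a b c d => G b a d c).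
Proof.
apply: (@reindex_bij2 _ _ _ _ (fun x : X4 N => ((x.1.2, x.1.1), (x.2.2, x.2.1)))
   (fun x : X4 N => ((x.1.2, x.1.1), (x.2.2, x.2.1)))).
- move=> [[a b] [c d]]; rewrite /cond4 /= => /andP [/and5P [h1 h2 h3 h4 h5] ->].
  by rewrite h1 h2 h3 h4 addnC h5.
- by move=> [[a b] [c d]].
- move=> [[a b] [c d]]; rewrite /cond4 /= => /andP [/and5P [h1 h2 h3 h4 h5] ->].
  by rewrite h1 h2 h3 h4 addnC h5.
- by move=> [[a b] [c d]].
- by move=> [[a b] [c d]].
Qed.

Lemma Q4_swapUV N P G : Q4 N P G = Q4 N (fun a b c d => P c d a b) (fun a b c d => G c d a b).
Proof.
apply: (@reindex_bij2 _ _ _ _ (fun x : X4 N => (x.2, x.1)) (fun x : X4 N => (x.2, x.1))).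
- move=> [[a b] [c d]]; rewrite /cond4 /= => /andP [/and5P [h1 h2 h3 h4 h5] ->].
  by rewrite h1 h2 h3 h4 mulnC [(d * _)%N]mulnC h5.
- by move=> [[a b] [c d]].
- move=> [[a b] [c d]]; rewrite /cond4 /= => /andP [/and5P [h1 h2 h3 h4 h5] ->].
  by rewrite h1 h2 h3 h4 mulnC [(d * _)%N]mulnC h5.
- by move=> [[a b] [c d]].
- by move=> [[a b] [c d]].
Qed.

Lemma range_ord N m (F : nat -> rat) : (m <= N.+1)%N ->
  \sum_(v < N.+1 | (0 < (v : nat))%N && ((v : nat) < m)%N) F v = \sum_(1 <= v < m) F v.
Proof.
move=> hm; rewrite big_geq_mkord (big_ord_widen_cond _ _ _ hm).
by apply: eq_bigl => v; rewrite andbC.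
Qed.

Lemma Q4_diag N G : Q4 N (fun a b _ _ => a == b) G =
  C1 N (fun u m => \sum_(1 <= v < m) G u u v (m - v)%N).
Proof.
rewrite /Q4 (partition_big (fun x : X4 N => ((x.1.1, inord ((x.2.1 : nat) + x.2.2)) : T N * T N)) (@cond1 N)).
  apply: eq_bigr => [[u m]]; rewrite /cond1 /= => /and3P [h1 h2 /eqP h3].
  have hm : (m <= N)%N by rewrite -ltnS.
  rewrite -(@range_ord N); last by rewrite ltnW.

  apply: (@reindex_bij2 _ _ _ _ (fun v : 'I_N.+1 => (((u, u), (v, inord (m - v))) : X4 N))
     (fun x : X4 N => x.2.1)).
  - move=> v /andP [hv1 hv2] /=.
    rewrite /cond4 /= inordK; last by lia.
    rewrite h1 hv1 eqxx /= andbT.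
    apply/andP; split; first by apply/andP; split; [lia|apply/eqP; nia].
    apply/eqP; congr (_, _); apply: val_inj; rewrite /= inordK; lia.
  - by [].
  - move=> [[a b] [c d]] /= /andP [/andP [] ].
    rewrite /cond4 /= => /and5P [ha hb hc hd /eqP he] /eqP hab /eqP [hu hm'].
    have := congr1 val hm'; rewrite /= inordK; last by nia.
    move=> hcd; rewrite hc /=; lia.
  - move=> [[a b] [c d]] /= /andP [/andP [] ].
    rewrite /cond4 /= => /and5P [ha hb hc hd /eqP he] /eqP hab /eqP [hu hm'].
    have := congr1 val hm'; rewrite /= inordK; last by nia.
    move=> hm2; subst.
    congr ((_, _), (_, _)); apply: val_inj; rewrite /= ?inordK; lia.
  - move=> v /andP [hv1 hv2] /=; rewrite inordK //; lia.
move=> [[a b] [c d]] /andP [] /=; rewrite /cond4 /cond1 /= => /and5P [ha hb hc hd /eqP he] /eqP hab.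
rewrite inordK; last by nia.
have hab' : (a : nat) = b by rewrite hab.
rewrite ha /=; apply/andP; split; [lia|apply/eqP; nia].
Qed.

Ltac bsplit := repeat (apply/andP; split).

Lemma Q4_shear N G : Q4 N (fun _ _ c d => (d < c)%N) G =
  Q4 N (fun a b _ _ => (b < a)%N) (fun a b c d => G b (a - b)%N (c + d)%N c).
Proof.
apply: (@reindex_bij2 _ _ _ _
   (fun x : X4 N => (((x.1.2, inord ((x.1.1 : nat) - x.1.2)), (inord ((x.2.1 : nat) + x.2.2), x.2.1)) : X4 N))
   (fun x : X4 N => (((inord ((x.1.1 : nat) + x.1.2), x.1.1), (x.2.2, inord ((x.2.1 : nat) - x.2.2))) : X4 N))).
- move=> [[a b] [c d]]; rewrite /cond4 /= => /andP [/and5P [h1 h2 h3 h4 /eqP h5] h6].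
  have ha := ltn_ord a.
  rewrite !inordK; try nia.
  bsplit; try lia; try (apply/eqP; nia).
- move=> [[a b] [c d]]; rewrite /cond4 /= => /andP [/and5P [h1 h2 h3 h4 /eqP h5] h6].
  have ha := ltn_ord a.
  congr ((_, _), (_, _)); apply: val_inj; rewrite /= !inordK; nia.
- move=> [[a b] [c d]]; rewrite /cond4 /= => /andP [/and5P [h1 h2 h3 h4 /eqP h5] h6].
  have hc := ltn_ord c.
  rewrite !inordK; try nia.
  bsplit; try lia; try (apply/eqP; nia).
- move=> [[a b] [c d]]; rewrite /cond4 /= => /andP [/and5P [h1 h2 h3 h4 /eqP h5] h6].
  have hc := ltn_ord c.
  congr ((_, _), (_, _)); apply: val_inj; rewrite /= !inordK; nia.
- move=> [[a b] [c d]]; rewrite /cond4 /= => /andP [/and5P [h1 h2 h3 h4 /eqP h5] h6].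
  have ha := ltn_ord a.
  rewrite !inordK //; nia.
Qed.


Lemma efB r (x y : nat) : (y <= x)%N ->
  ef r (x - y)%N%:R = \sum_(k < r.+1) ef k x%:R * ((-1) ^+ (r - k) * ef (r - k) y%:R).
Proof.
move=> h; rewrite natrB // efD; apply: eq_bigr => k _; by rewrite ef_opp.
Qed.

Lemma exp1 a b r1 r2 (U1 U2 V1 V2 : nat) : (U2 < U1)%N ->
  W2 a.+1 r1 b.+1 r2 U2 (U1 - U2) (V1 + V2) V1 =
  \sum_(n < a.+1) \sum_(k < r2.+1)
    (('C(a.+1 + b.+1 - n.+1 - 1, a.+1 - n.+1))%:R * ('C(r1 + r2 - k, r1))%:R
      * (-1) ^+ (r2 - k) * W2 (a.+1 + b.+1 - n.+1) k n.+1 (r1 + r2 - k) U1 U2 V1 V2).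
Proof.
move=> h; rewrite /W2 /W1 /= (efB _ (ltnW h)) natrD [(V1%:R + _)]addrC efD.
rewrite mulr_sumr mulr_suml; apply: eq_bigr => i _.
rewrite mulr_suml mulr_sumr; apply: eq_bigr => k _.
have hi : (i <= a)%N by rewrite -ltnS.
have hk : (k <= r2)%N by rewrite -ltnS.
have -> : (a.+1 + b.+1 - i.+1 - 1)%N = (a - i + b)%N by lia.
have -> : (a.+1 - i.+1)%N = (a - i)%N by lia.
have -> : (a.+1 + b.+1 - i.+1).-1 = (a - i + b)%N by lia.
have -> : (r1 + r2 - k)%N = (r1 + (r2 - k))%N by lia.
transitivity ((-1) ^+ (r2 - k) * ef k U1%:R * ef i V2%:R * (ef r1 U2%:R * ef (r2 - k) U2%:R)
   * (ef (a - i) V1%:R * ef b V1%:R)); first ring.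
rewrite !efM /=; ring.
Qed.

Lemma exp2 a b r1 r2 (U1 U2 V1 V2 : nat) : (U2 < U1)%N ->
  W2 a.+1 r1 b.+1 r2 (U1 - U2) U2 V1 (V1 + V2) =
  \sum_(n < b.+1) \sum_(k < r1.+1)
    (('C(a.+1 + b.+1 - n.+1 - 1, a.+1 - 1))%:R * ('C(r1 + r2 - k, r1 - k))%:R
      * (-1) ^+ (r1 - k) * W2 (a.+1 + b.+1 - n.+1) k n.+1 (r1 + r2 - k) U1 U2 V1 V2).
Proof.
move=> h; rewrite /W2 /W1 /= (efB _ (ltnW h)) natrD [(V1%:R + _)]addrC efD.
rewrite mulrC mulr_sumr mulr_suml; apply: eq_bigr => i _.
rewrite mulr_suml mulr_sumr; apply: eq_bigr => k _.
have hi : (i <= b)%N by rewrite -ltnS.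
have hk : (k <= r1)%N by rewrite -ltnS.
have -> : (a.+1 + b.+1 - i.+1 - 1)%N = (a + (b - i))%N by lia.
have -> : (a.+1 - 1)%N = a by lia.
have -> : (a.+1 + b.+1 - i.+1).-1 = (a + (b - i))%N by lia.
have -> : (r1 + r2 - k)%N = (r1 - k + r2)%N by lia.
transitivity ((-1) ^+ (r1 - k) * ef k U1%:R * ef i V2%:R * (ef (r1 - k) U2%:R * ef r2 U2%:R)
   * (ef a V1%:R * ef (b - i) V1%:R)); first ring.
rewrite !efM /=; ring.
Qed.


Lemma Q4_tri_u N G : Q4 N (fun _ _ _ _ => true) G =
  Q4 N (fun a b _ _ => (b < a)%N) G + Q4 N (fun a b _ _ => (a < b)%N) G + Q4 N (fun a b _ _ => a == b) G.
Proof.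
rewrite (Q4_split _ _ (fun a b _ _ => (b < a)%N)).
rewrite (Q4_split _ (fun a b _ _ => true && ~~ (b < a)%N) (fun a b _ _ => (a < b)%N)) addrA.
congr (_ + _ + _); apply: Q4_eqP => a b c d /=; by case: ltngtP.
Qed.

Lemma Q4_tri_v N G : Q4 N (fun _ _ _ _ => true) G =
  Q4 N (fun _ _ c d => (d < c)%N) G + Q4 N (fun _ _ c d => (c < d)%N) G + Q4 N (fun _ _ c d => c == d) G.
Proof.
rewrite (Q4_split _ _ (fun _ _ c d => (d < c)%N)).
rewrite (Q4_split _ (fun _ _ c d => true && ~~ (d < c)%N) (fun _ _ c d => (c < d)%N)) addrA.
congr (_ + _ + _); apply: Q4_eqP => a b c d /=; by case: ltngtP.
Qed.

Lemma diag1 a b r1 r2 u m : (0 < m)%N ->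
  \sum_(1 <= v < m) W2 a.+1 r1 b.+1 r2 u u v (m - v)%N =
  ('C(r1 + r2, r1))%:R * (ef (r1 + r2) u%:R * Rc a b m).
Proof.
move=> hm; rewrite -core // /Lc mulrA -efM mulr_sumr; apply: eq_bigr => v _.
rewrite /W2 /W1 /=; ring.
Qed.

Lemma diag2 a b r1 r2 u m : (0 < m)%N ->
  \sum_(1 <= v < m) W2 a.+1 r1 b.+1 r2 v (m - v)%N u u =
  ('C(a + b, a))%:R * (ef (a + b) u%:R * Rc r1 r2 m).
Proof.
move=> hm; rewrite -core // /Lc mulrA -efM mulr_sumr; apply: eq_bigr => v _.
rewrite /W2 /W1 /=; ring.
Qed.

Lemma sum_shift1 (F : nat -> rat) s : \sum_(1 <= j < s.+1) F j = \sum_(n < s) F n.+1.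
Proof. by rewrite big_add1 /= big_mkord. Qed.

Lemma part1 a b r1 r2 N :
  qmul (bibracket [:: a.+1] [:: r1]) (bibracket [:: b.+1] [:: r2]) N =
    bibracket [:: a.+1; b.+1] [:: r1; r2] N
  + bibracket [:: b.+1; a.+1] [:: r2; r1] N
  + ('C(r1 + r2, r1))%:R * (bibracket [:: (a.+1 + b.+1)%N] [:: (r1 + r2)%N] N
     + \sum_(n < a.+1) hh (a - n) b * bibracket [:: n.+1] [:: (r1 + r2)%N] N
     + \sum_(n < b.+1) hh (b - n) a * bibracket [:: n.+1] [:: (r1 + r2)%N] N).
Proof.
rewrite qmulQ4 Q4_tri_u.
congr (_ + _ + _).
- by rewrite bib2.
- rewrite bib2 Q4_swap; apply: Q4_ext => u1 u2 v1 v2 _ _ _ _ _ _.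
  by rewrite /W2 mulrC.
rewrite Q4_diag.
rewrite (@C1_ext _ _ (fun u m => ('C(r1 + r2, r1))%:R * (W1 (a.+1 + b.+1) (r1 + r2) u m
    + \sum_(n < a.+1) hh (a - n) b * W1 n.+1 (r1 + r2) u m
    + \sum_(n < b.+1) hh (b - n) a * W1 n.+1 (r1 + r2) u m))).
  rewrite C1_scale !C1_add !C1_sum !bib1; congr (_ * (_ + _ + _)).
  + by apply: eq_bigr => n _; rewrite C1_scale bib1.
  + by apply: eq_bigr => n _; rewrite C1_scale bib1.
move=> u m hu hm _; rewrite diag1 //; congr (_ * _).
rewrite /Rc /P1f /W1 !mulrDr !mulr_sumr addSn addnS /=.
congr (_ + _ + _); apply: eq_bigr => n _; ring.
Qed.

Lemma part2 a b r1 r2 N :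
  qmul (bibracket [:: a.+1] [:: r1]) (bibracket [:: b.+1] [:: r2]) N =
    \sum_(n < a.+1) \sum_(k < r2.+1)
      (('C(a.+1 + b.+1 - n.+1 - 1, a.+1 - n.+1))%:R * ('C(r1 + r2 - k, r1))%:R
       * (-1) ^+ (r2 - k)
       * bibracket [:: (a.+1 + b.+1 - n.+1)%N; n.+1] [:: (k : nat); (r1 + r2 - k)%N] N)
  + \sum_(n < b.+1) \sum_(k < r1.+1)
      (('C(a.+1 + b.+1 - n.+1 - 1, a.+1 - 1))%:R * ('C(r1 + r2 - k, r1 - k))%:R
       * (-1) ^+ (r1 - k)
       * bibracket [:: (a.+1 + b.+1 - n.+1)%N; n.+1] [:: (k : nat); (r1 + r2 - k)%N] N)
  + ('C(a + b, a))%:R * (bibracket [:: (a.+1 + b.+1 - 1)%N] [:: (r1 + r2).+1] N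
     + \sum_(j < r1.+1) hh (r1 - j) r2 * bibracket [:: (a.+1 + b.+1 - 1)%N] [:: (j : nat)] N
     + \sum_(j < r2.+1) hh (r2 - j) r1 * bibracket [:: (a.+1 + b.+1 - 1)%N] [:: (j : nat)] N).
Proof.
rewrite qmulQ4 Q4_tri_v.
congr (_ + _ + _).
- rewrite Q4_shear.
  rewrite (@Q4_ext _ _ _ (fun U1 U2 V1 V2 => \sum_(n < a.+1) \sum_(k < r2.+1)
    (('C(a.+1 + b.+1 - n.+1 - 1, a.+1 - n.+1))%:R * ('C(r1 + r2 - k, r1))%:R
      * (-1) ^+ (r2 - k) * W2 (a.+1 + b.+1 - n.+1) k n.+1 (r1 + r2 - k) U1 U2 V1 V2))).
    rewrite Q4_sum; apply: eq_bigr => n _; rewrite Q4_sum; apply: eq_bigr => k _.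
    by rewrite Q4_scale bib2.
  by move=> U1 U2 V1 V2 _ _ _ _ _ h; rewrite exp1.
- rewrite Q4_swap /= Q4_shear.
  rewrite (@Q4_ext _ _ _ (fun U1 U2 V1 V2 => \sum_(n < b.+1) \sum_(k < r1.+1)
    (('C(a.+1 + b.+1 - n.+1 - 1, a.+1 - 1))%:R * ('C(r1 + r2 - k, r1 - k))%:R
      * (-1) ^+ (r1 - k) * W2 (a.+1 + b.+1 - n.+1) k n.+1 (r1 + r2 - k) U1 U2 V1 V2))).
    rewrite Q4_sum; apply: eq_bigr => n _; rewrite Q4_sum; apply: eq_bigr => k _.
    by rewrite Q4_scale bib2.
  by move=> U1 U2 V1 V2 _ _ _ _ _ h; rewrite exp2.
rewrite Q4_swapUV /= Q4_diag C1_swap.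
have ES : (a.+1 + b.+1 - 1).-1 = (a + b)%N by lia.
rewrite (@C1_ext _ _ (fun x y => ('C(a + b, a))%:R * (W1 (a.+1 + b.+1 - 1) (r1 + r2).+1 x y
    + \sum_(j < r1.+1) hh (r1 - j) r2 * W1 (a.+1 + b.+1 - 1) j x y
    + \sum_(j < r2.+1) hh (r2 - j) r1 * W1 (a.+1 + b.+1 - 1) j x y))).
  rewrite C1_scale !C1_add !C1_sum !bib1; congr (_ * (_ + _ + _)).
  + by apply: eq_bigr => n _; rewrite C1_scale bib1.
  + by apply: eq_bigr => n _; rewrite C1_scale bib1.
move=> x y hx hy _; rewrite diag2 //; congr (_ * _).
rewrite /Rc /P1f /W1 ES !mulrDr !mulr_sumr /=.
congr (_ + _ + _); try (apply: eq_bigr => n _); ring.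
Qed.


Theorem proposition3p3 (s1 s2 r1 r2 : nat) :
  (0 < s1)%N -> (0 < s2)%N ->
  (* (i) *)
  (forall N : nat,
    qmul (bibracket [:: s1] [:: r1]) (bibracket [:: s2] [:: r2]) N =
      bibracket [:: s1; s2] [:: r1; r2] N
    + bibracket [:: s2; s1] [:: r2; r1] N
    + ('C(r1 + r2, r1))%:R * bibracket [:: (s1 + s2)%N] [:: (r1 + r2)%N] N
    + ('C(r1 + r2, r1))%:R *
      \sum_(1 <= j < s1.+1)
        ((-1) ^+ (s2 - 1)%N * bernoulli (s1 + s2 - j)%N / ((s1 + s2 - j)%N`!)%:R
         * ('C(s1 + s2 - j - 1, s1 - j))%:R * bibracket [:: j] [:: (r1 + r2)%N] N)
    + ('C(r1 + r2, r1))%:R *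
      \sum_(1 <= j < s2.+1)
        ((-1) ^+ (s1 - 1)%N * bernoulli (s1 + s2 - j)%N / ((s1 + s2 - j)%N`!)%:R
         * ('C(s1 + s2 - j - 1, s2 - j))%:R * bibracket [:: j] [:: (r1 + r2)%N] N))
  /\
  (* (ii) *)
  (forall N : nat,
    qmul (bibracket [:: s1] [:: r1]) (bibracket [:: s2] [:: r2]) N =
      \sum_(1 <= j < s1.+1) \sum_(0 <= k < r2.+1)
        (('C(s1 + s2 - j - 1, s1 - j))%:R * ('C(r1 + r2 - k, r1))%:R
         * (-1) ^+ (r2 - k)%N
         * bibracket [:: (s1 + s2 - j)%N; j] [:: k; (r1 + r2 - k)%N] N)
    + \sum_(1 <= j < s2.+1) \sum_(0 <= k < r1.+1)
        (('C(s1 + s2 - j - 1, s1 - 1))%:R * ('C(r1 + r2 - k, r1 - k))%:R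
         * (-1) ^+ (r1 - k)%N
         * bibracket [:: (s1 + s2 - j)%N; j] [:: k; (r1 + r2 - k)%N] N)
    + ('C(s1 + s2 - 2, s1 - 1))%:R
        * bibracket [:: (s1 + s2 - 1)%N] [:: (r1 + r2 + 1)%N] N
    + ('C(s1 + s2 - 2, s1 - 1))%:R *
      \sum_(0 <= j < r1.+1)
        ((-1) ^+ r2 * bernoulli (r1 + r2 - j + 1)%N / ((r1 + r2 - j + 1)%N`!)%:R
         * ('C(r1 + r2 - j, r1 - j))%:R * bibracket [:: (s1 + s2 - 1)%N] [:: j] N)
    + ('C(s1 + s2 - 2, s1 - 1))%:R *
      \sum_(0 <= j < r2.+1)
        ((-1) ^+ r1 * bernoulli (r1 + r2 - j + 1)%N / ((r1 + r2 - j + 1)%N`!)%:R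
         * ('C(r1 + r2 - j, r2 - j))%:R * bibracket [:: (s1 + s2 - 1)%N] [:: j] N)).
Proof.
case: s1 => [//|a]; case: s2 => [//|b] _ _.
split => N.
- rewrite part1 !sum_shift1 !mulrDr !addrA.
  congr (_ + (_ * _) + (_ * _)); apply: eq_bigr => n _.
  + have hn : (n <= a)%N by rewrite -ltnS.
    have -> : (a.+1 + b.+1 - n.+1)%N = (a - n + b).+1 by lia.
    rewrite !subn1 /= ?subn0 ?subSS /hh /bt.
    ring.
  + have hn : (n <= b)%N by rewrite -ltnS.
    have -> : (a.+1 + b.+1 - n.+1)%N = (b - n + a).+1 by lia.
    rewrite !subn1 /= ?subn0 ?subSS /hh /bt.
    ring.
- rewrite part2 !sum_shift1 !mulrDr !addrA.
  under [X in _ = X + _ + _ + _ + _]eq_bigr do rewrite big_mkord.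
  under [X in _ = _ + X + _ + _ + _]eq_bigr do rewrite big_mkord.
  rewrite !big_mkord.
  have -> : (a.+1 + b.+1 - 2)%N = (a + b)%N by lia.
  rewrite subn1 /= addn1.
  congr (_ + _ + _ + (_ * _) + (_ * _)); apply: eq_bigr => n _.
  + have hn : (n <= r1)%N by rewrite -ltnS.
    have -> : (r1 + r2 - n + 1)%N = (r1 - n + r2).+1 by lia.
    have -> : (r1 + r2 - n)%N = (r1 - n + r2)%N by lia.
    rewrite /hh /bt; ring.
  + have hn : (n <= r2)%N by rewrite -ltnS.
    have -> : (r1 + r2 - n + 1)%N = (r2 - n + r1).+1 by lia.
    have -> : (r1 + r2 - n)%N = (r2 - n + r1)%N by lia.
    rewrite /hh /bt; ring.
Qed.
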